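(* Let $k\ge 1$ and let $G$ and $H$ be graphs with $\delta(G)\ge\delta(H)\ge k$. Then \[ \Gamma_{\times k,t}(G\times H)\ge\max\{\Gamma_{\times k,t}(G)\cdot\Gamma_t(H),\ \Gamma_{\times k,t}(H)\cdot\Gamma_t(G)\}. \]
   Context: For an integer $k\ge1$ and a graph $G$ with $\delta(G)\ge k$, a set $S\subseteq V(G)$ is a $k$-tuple total dominating set ($k$TDS) if $|N_G(x)\cap S|\ge k$ for every $x\in V(G)$, and $\Gamma_{\times k,t}(G)$ is the maximum cardinality of a minimal (with respect to inclusion) $k$TDS of $G$. $\Gamma_t(G)=\Gamma_{\times 1,t}(G)$ is the upper total domination number. The cross (direct) product $G\times H$ has vertex set $V(G)\times V(H)$, with $(g_1,h_1)\sim(g_2,h_2)$ iff $g_1g_2\in E(G)$ and $h_1h_2\in E(H)$. *)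

(* Defs.v *)
From mathcomp Require Import all_boot.
Set Implicit Arguments. Unset Strict Implicit. Unset Printing Implicit Defensive.

Record sgraph (T : finType) := SGraph {
  adj : rel T;
  adj_sym : symmetric adj;
  adj_irrefl : irreflexive adj }.

Definition nbhd (T : finType) (G : sgraph T) (x : T) : {set T} := [set y | adj G x y].

(* minimum degree delta(G) (equals #|T| = 0 for the empty graph) *)
Definition mindeg (T : finType) (G : sgraph T) : nat :=
  \big[minn/#|T|]_(x : T) #|nbhd G x|.

Definition is_kTDS (T : finType) (G : sgraph T) (k : nat) (S : {set T}) : bool :=
  [forall x, k <= #|nbhd G x :&: S|].

Definition is_min_kTDS (T : finType) (G : sgraph T) (k : nat) (S : {set T}) : bool :=
  is_kTDS G k S && [forall S' : {set T}, (S' \proper S) ==> ~~ is_kTDS G k S'].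

Definition upper_kTDN (T : finType) (G : sgraph T) (k : nat) : nat :=
  \max_(S : {set T} | is_min_kTDS G k S) #|S|.

Definition upper_TDN (T : finType) (G : sgraph T) : nat := upper_kTDN G 1.

Definition cross_adj (T U : finType) (G : sgraph T) (H : sgraph U) : rel (T * U)%type :=
  fun p q => adj G p.1 q.1 && adj H p.2 q.2.

Lemma cross_adj_sym (T U : finType) (G : sgraph T) (H : sgraph U) :
  symmetric (cross_adj G H).
Proof. by move=> p q; rewrite /cross_adj (adj_sym G) (adj_sym H). Qed.

Lemma cross_adj_irrefl (T U : finType) (G : sgraph T) (H : sgraph U) :
  irreflexive (cross_adj G H).
Proof. by move=> p; rewrite /cross_adj (adj_irrefl G). Qed.

Definition cross (T U : finType) (G : sgraph T) (H : sgraph U) : sgraph (T * U)%type :=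
  @SGraph _ (cross_adj G H) (@cross_adj_sym T U G H) (@cross_adj_irrefl T U G H).

(* Main.v *)
Require Import Defs.
From mathcomp Require Import all_boot.
From mathcomp Require Import zify.

Lemma min_char (T : finType) (G : sgraph T) k (S : {set T}) :
  is_min_kTDS G k S -> forall s, s \in S ->
  exists x, s \in nbhd G x /\ #|nbhd G x :&: S| = k.
Proof.
case/andP=> /forallP hS /forallP hm s sS.
have := hm (S :\ s); rewrite properD1 // /= /is_kTDS negb_forall.
case/existsP=> x; rewrite -ltnNge => lt.
exists x.
have hx := hS x.
have sub : nbhd G x :&: (S :\ s) \subset nbhd G x :&: S by apply: setIS; apply: subD1set.
have sN : s \in nbhd G x.
  apply/negPn/negP => ns.
  have : nbhd G x :&: (S :\ s) = nbhd G x :&: S.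
    apply/setP=> y; rewrite !inE; case: (eqVneq y s) => [->|]; last by [].
    by move: ns; rewrite inE => /negbTE ->.
  by move=> e; move: lt; rewrite e ltnNge hx.
split=> //.
have : nbhd G x :&: S = s |: (nbhd G x :&: (S :\ s)).
  apply/setP=> y; rewrite !inE; case: (eqVneq y s) => [->|] //=.
  by move: sN; rewrite inE => ->; rewrite sS.
move=> e; move: lt hx; rewrite e cardsU1 !inE eqxx /=.
case: (#|_|) => [|n] /=; rewrite ?add1n; lia.
Qed.

Lemma char_min (T : finType) (G : sgraph T) k (S : {set T}) :
  is_kTDS G k S ->
  (forall s, s \in S -> exists x, s \in nbhd G x /\ #|nbhd G x :&: S| = k) ->
  is_min_kTDS G k S.
Proof.
move=> hS hc; apply/andP; split=> //; apply/forallP=> S'; apply/implyP.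
case/properP=> sub [s sS nS'].
have [x [sN hk]] := hc s sS.
rewrite /is_kTDS negb_forall; apply/existsP; exists x; rewrite -ltnNge -hk.
apply: proper_card; apply/properP; split.
  by apply: setIS.
by exists s; rewrite !inE ?sS ?andbT //; move: sN; rewrite inE => -> /=.
Qed.

Lemma nbhd_cross (T U : finType) (G : sgraph T) (H : sgraph U) x y A B :
  nbhd (cross G H) (x, y) :&: setX A B = setX (nbhd G x :&: A) (nbhd H y :&: B).
Proof.
apply/setP=> [[a b]]; rewrite !inE /cross /cross_adj /=.
by case: (adj G x a); case: (adj H y b); case: (a \in A); case: (b \in B).
Qed.

Lemma prod_min (T U : finType) (G : sgraph T) (H : sgraph U) k1 k2 A B :
  is_min_kTDS G k1 A -> is_min_kTDS H k2 B ->
  is_min_kTDS (cross G H) (k1 * k2) (setX A B).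
Proof.
move=> hA hB; apply: char_min.
  apply/forallP=> [[x y]]; rewrite nbhd_cross cardsX.
  move: hA hB => /andP[/forallP hA _] /andP[/forallP hB _].
  by apply: leq_mul.
move=> [a b] /setXP[aA bB].
have [x [ax hx]] := @min_char _ _ _ _ hA _ aA.
have [y [bx hy]] := @min_char _ _ _ _ hB _ bB.
exists (x, y); split; last by rewrite nbhd_cross cardsX hx hy.
by move: ax bx; rewrite !inE /cross /cross_adj /= => -> ->.
Qed.

Lemma maxmul (T U : finType) (P : pred {set T}) (Q : pred {set U}) M :
  (forall A B, P A -> Q B -> #|A| * #|B| <= M) ->
  (\max_(A | P A) #|A|) * (\max_(B | Q B) #|B|) <= M.
Proof.
move=> h.
rewrite (big_morph (fun x => x * (\max_(B | Q B) #|B|)) (fun a b => maxnMl a b _) (mul0n _)).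
apply/bigmax_leqP=> A PA.
rewrite mulnC (big_morph (fun x => x * #|A|) (fun a b => maxnMl a b _) (mul0n _)).
apply/bigmax_leqP=> B QB; rewrite mulnC; exact: h.
Qed.

Theorem mainTheorem14 (T U : finType) (G : sgraph T) (H : sgraph U) (k : nat) :
  1 <= k ->
  mindeg H <= mindeg G ->
  k <= mindeg H ->
  maxn (upper_kTDN G k * upper_TDN H) (upper_kTDN H k * upper_TDN G)
    <= upper_kTDN (cross G H) k.
Proof.
move=> _ _ _; rewrite geq_max /upper_TDN /upper_kTDN; apply/andP; split.
  apply: maxmul => A B hA hB.
  rewrite -cardsX; apply: (@leq_bigmax_cond _ (fun S => is_min_kTDS (cross G H) k S) (fun S => #|S|) (setX A B)).
  by rewrite -[k]muln1; apply: prod_min.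
rewrite mulnC; apply: maxmul => A B hA hB.
rewrite -cardsX; apply: (@leq_bigmax_cond _ (fun S => is_min_kTDS (cross G H) k S) (fun S => #|S|) (setX A B)).
by rewrite -[k]mul1n; apply: prod_min.
Qed.
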